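(* Let $n\ge 2$ and let $f$ be the $n$-ary operation on $\mathbb{Z}_8$ given by $f(\mathbf{x})=x_1x_2\cdots x_n\sum_{\alpha\in I_n}b_\alpha\mathbf{x}^\alpha$ with $b_\alpha\in\{0,1\}$ for every $\alpha\in I_n$. If $f$ preserves the relation $Z$, then $b_\alpha=0$ for every $\alpha\in I_n$.
   Context: $I_n$ is the set of all $n$-tuples $\alpha\in\{0,1,2\}^n$ with at most two nonzero components, and $\mathbf{x}^\alpha=x_1^{\alpha_1}\cdots x_n^{\alpha_n}$. $P_4$ is the power set of $\{1,2,3,4\}$. For $A\in P_4$, $\mathbf{g}^A\in\mathbb{Z}_8^{P_4}$ is the tuple with $B$-component $1$ if $A\subseteq B$ and $0$ otherwise. Every $\mathbf{u}\in\mathbb{Z}_8^{P_4}$ has a unique expression $\mathbf{u}=\sum_{A\in P_4}a_A\mathbf{g}^A$ with $a_A\in\mathbb{Z}_8$. $Z\subseteq \mathbb{Z}_8^{P_4}$ consists of all $\mathbf{u}$ whose coefficients satisfy: (Z1) $a_{\{2\}}\equiv 2a_{\{1\}}\pmod 4$ and $a_{\{4\}}\equiv 2a_{\{3\}}\pmod 4$; (Z2) $a_A\equiv 0\pmod 2$ whenever $|A|\ge 2$; (Z3) $a_A\equiv 0\pmod 4$ whenever $|A|\ge 2$ and $A\cap\{2,4\}\neq\emptyset$; (Z4) $a_A=0$ whenever $\{2,4\}\subseteq A$. An operation preserves $Z$ if applying it componentwise to elements of $Z$ yields an element of $Z$. *)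

(* Defs.v *)
From HB Require Import structures.
From mathcomp Require Import all_boot all_order all_algebra.
Set Implicit Arguments. Unset Strict Implicit. Unset Printing Implicit Defensive.
Import GRing.Theory.
Local Open Scope ring_scope.

(* The ground set {1,2,3,4} is represented by 'I_4, with element k+1 encoded
   as the ordinal k.  So e1, e2, e3, e4 below stand for 1, 2, 3, 4. *)
Definition e1 : 'I_4 := @Ordinal 4 0 isT.
Definition e2 : 'I_4 := @Ordinal 4 1 isT.
Definition e3 : 'I_4 := @Ordinal 4 2 isT.
Definition e4 : 'I_4 := @Ordinal 4 3 isT.

Definition P4 := {set 'I_4}.

Definition vecP4 := {ffun P4 -> 'Z_8}.

Definition gvec (A : P4) : vecP4 := [ffun B : P4 => (A \subset B)%:R].

Definition combo (a : vecP4) : vecP4 := [ffun B : P4 => \sum_(A : P4) a A * gvec A B].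

(* Conditions (Z1)-(Z4) on the coefficient family a (congruences read on the
   representative in {0,...,7}; reduction mod 2 / mod 4 is well defined on Z_8). *)
Definition Zcoeffs (a : vecP4) : Prop :=
  [/\
      (val (a [set e2]) %% 4 = (2 * val (a [set e1])) %% 4)%N /\
      (val (a [set e4]) %% 4 = (2 * val (a [set e3])) %% 4)%N,
      (forall A : P4, (2 <= #|A|)%N -> (2 %| val (a A))%N),
      (forall A : P4, (2 <= #|A|)%N -> A :&: [set e2; e4] != set0 ->
          (4 %| val (a A))%N) &
      (forall A : P4, [set e2; e4] \subset A -> a A = 0)].

Definition inZ (u : vecP4) : Prop := exists a : vecP4, u = combo a /\ Zcoeffs a.

Definition In_set (n : nat) (alpha : {ffun 'I_n -> 'I_3}) : bool :=
  (#|[set i | alpha i != ord0]| <= 2)%N.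

Definition monom (n : nat) (alpha : {ffun 'I_n -> 'I_3}) (x : 'I_n -> 'Z_8) : 'Z_8 :=
  \prod_(i < n) x i ^+ (alpha i : nat).

Definition fop (n : nat) (b : {ffun 'I_n -> 'I_3} -> 'Z_8) (x : 'I_n -> 'Z_8) : 'Z_8 :=
  (\prod_(i < n) x i) * \sum_(alpha | In_set alpha) b alpha * monom alpha x.

Definition preservesZ (n : nat) (f : ('I_n -> 'Z_8) -> 'Z_8) : Prop :=
  forall u : 'I_n -> vecP4, (forall i, inZ (u i)) ->
    inZ [ffun B : P4 => f (fun i => u i B)].

(* Main.v *)
Require Import Defs.
From mathcomp Require Import all_boot all_order all_algebra.
From mathcomp Require Import ring zify.
Set Implicit Arguments. Unset Strict Implicit. Unset Printing Implicit Defensive.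
Import GRing.Theory.
Local Open Scope ring_scope.

Lemma set1_neq0 (x : 'I_4) : [set x] != set0 :> P4.
Proof. by apply/set0Pn; exists x; rewrite set11. Qed.

Lemma neqS (S T : P4) w : w \in S -> w \notin T -> S != T.
Proof. by move=> h1 h2; apply/eqP=> E; move: h2; rewrite -E h1. Qed.

Lemma comboE a B : combo a B = \sum_(A : P4 | A \subset B) a A.
Proof.
rewrite ffunE [RHS]big_mkcond; apply: eq_bigr => A _; rewrite ffunE.
by case: (A \subset B); rewrite ?mulr1 ?mulr0.
Qed.

Lemma combo0 a : combo a set0 = a set0.
Proof.
rewrite comboE (bigD1 set0) ?sub0set //= big1 ?addr0 // => A.
by rewrite subset0 => /andP[/eqP-> /eqP].
Qed.

Lemma combo1 a x : combo a [set x] = a set0 + a [set x].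
Proof.
rewrite comboE (bigD1 [set x]) ?subxx //= (bigD1 set0) ?sub0set //=;
  last by rewrite eq_sym set1_neq0.
rewrite big1 ?addr0; first by rewrite addrC.
by move=> A; rewrite subset1 => /andP[/andP[/orP[->|->]]].
Qed.

Lemma subset2 (A : P4) x y : A \subset [set x; y] ->
  [|| A == set0, A == [set x], A == [set y] | A == [set x; y]].
Proof.
move/subsetP=> sub.
have hA z : (z \in A) -> (z == x) || (z == y) by move/sub; rewrite !inE.
case hx: (x \in A); case hy: (y \in A).
- apply/or4P; constructor 4; apply/eqP/setP=> z; rewrite !inE.
  apply/idP/idP; first exact: hA.
  by case/orP=> /eqP->.
- apply/or4P; constructor 2; apply/eqP/setP=> z; rewrite !inE.
  apply/idP/idP; last by move/eqP->.
  by move=> zA; case/orP: (hA z zA) => /eqP E //; move: zA; rewrite E hy.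
- apply/or4P; constructor 3; apply/eqP/setP=> z; rewrite !inE.
  apply/idP/idP; last by move/eqP->.
  by move=> zA; case/orP: (hA z zA) => /eqP E //; move: zA; rewrite E hx.
- apply/or4P; constructor 1; apply/eqP/setP=> z; rewrite !inE.
  apply/negbTE/negP=> zA; case/orP: (hA z zA) => /eqP E; move: zA.
  by rewrite E hx. by rewrite E hy.
Qed.

Lemma combo2 a x y : x != y ->
  combo a [set x; y] = a set0 + a [set x] + a [set y] + a [set x; y].
Proof.
move=> xy.
have n1 : [set x; y] != [set x] :> P4 by apply: (@neqS _ _ y); rewrite !inE ?eqxx ?orbT // eq_sym.
have n2 : [set x; y] != [set y] :> P4 by apply: (@neqS _ _ x); rewrite !inE ?eqxx // eq_sym.
have n3 : [set x] != [set y] :> P4 by apply: (@neqS _ _ x); rewrite !inE ?eqxx.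
have n4 : [set x; y] != set0 :> P4 by apply/set0Pn; exists x; rewrite !inE eqxx.
rewrite comboE (bigD1 [set x; y]) ?subxx //= (bigD1 [set x]) /=; last first.
  by rewrite eq_sym n1 sub1set !inE eqxx.
rewrite (bigD1 [set y]) /=; last first.
  by rewrite eq_sym n2 eq_sym n3 sub1set !inE eqxx orbT.
rewrite (bigD1 set0) /=; last by rewrite sub0set !(eq_sym set0) n4 !set1_neq0.
rewrite big1 ?addr0; first ring.
move=> A /andP[/andP[/andP[/andP[sub h1] h2] h3] h4].
by case/or4P: (subset2 sub) => /eqP E; move: h1 h2 h3 h4; rewrite E eqxx ?andbF.
Qed.

Lemma zcoef1 (a : vecP4) (x : 'I_4) : a [set x] = combo a [set x] - combo a set0.
Proof. rewrite combo1 combo0; ring. Qed.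

Lemma zcoef2 (a : vecP4) (x y : 'I_4) : x != y ->
  a [set x; y] = combo a [set x; y] - combo a [set x] - combo a [set y] + combo a set0.
Proof. move=> xy; rewrite combo2 // !combo1 combo0; ring. Qed.

Definition zcol (c0 c1 c2 c3 c4 : 'Z_8) : vecP4 :=
  [ffun B : P4 => c0 + c1 * (e1 \in B)%:R + c2 * (e2 \in B)%:R
                  + c3 * (e3 \in B)%:R + c4 * (e4 \in B)%:R].

Definition colc (c0 c1 c2 c3 c4 : 'Z_8) : vecP4 :=
  [ffun A : P4 => if A == set0 then c0 else if A == [set e1] then c1
     else if A == [set e2] then c2 else if A == [set e3] then c3
     else if A == [set e4] then c4 else 0].

Lemma s1neq (x y : 'I_4) : x != y -> ([set x] == [set y] :> P4) = false.
Proof. by move=> h; rewrite (inj_eq set1_inj) (negbTE h). Qed.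

Lemma s10 (x : 'I_4) : ([set x] == set0 :> P4) = false.
Proof. exact: negbTE (set1_neq0 x). Qed.

Lemma colc_big (c0 c1 c2 c3 c4 : 'Z_8) (A : P4) : (2 <= #|A|)%N -> colc c0 c1 c2 c3 c4 A = 0.
Proof.
move=> h; rewrite ffunE.
by repeat (case: eqP => [E|_]; first by move: h; rewrite E ?cards0 ?cards1).
Qed.

Lemma combo_zcolc c0 c1 c2 c3 c4 : combo (colc c0 c1 c2 c3 c4) = zcol c0 c1 c2 c3 c4.
Proof.
apply/ffunP=> B; rewrite !ffunE.
rewrite (bigD1 set0) //= (bigD1 [set e1]) /=; last by rewrite set1_neq0.
rewrite (bigD1 [set e2]) /=; last by rewrite set1_neq0 s1neq.
rewrite (bigD1 [set e3]) /=; last by rewrite set1_neq0 !s1neq.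
rewrite (bigD1 [set e4]) /=; last by rewrite set1_neq0 !s1neq.
rewrite big1; last first.
  move=> A /andP[/andP[/andP[/andP[h0 h1] h2] h3] h4].
  by rewrite !ffunE (negbTE h0) (negbTE h1) (negbTE h2) (negbTE h3) (negbTE h4) mul0r.
by rewrite !ffunE !eqxx !s10 !s1neq // sub0set !sub1set mulr1 addr0 !addrA.
Qed.

Lemma zcol_inZ c0 c1 c2 c3 c4 :
  (val c2 %% 4 = (2 * val c1) %% 4)%N -> (val c4 %% 4 = (2 * val c3) %% 4)%N ->
  inZ (zcol c0 c1 c2 c3 c4).
Proof.
move=> h1 h2; exists (colc c0 c1 c2 c3 c4); split; first by rewrite combo_zcolc.
have c2v : colc c0 c1 c2 c3 c4 [set e2] = c2 by rewrite ffunE eqxx !s10 ?s1neq.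
have c1v : colc c0 c1 c2 c3 c4 [set e1] = c1 by rewrite ffunE eqxx !s10 ?s1neq.
have c3v : colc c0 c1 c2 c3 c4 [set e3] = c3 by rewrite ffunE eqxx !s10 ?s1neq.
have c4v : colc c0 c1 c2 c3 c4 [set e4] = c4 by rewrite ffunE eqxx !s10 ?s1neq.
split.
- by rewrite c1v c2v c3v c4v.
- by move=> A hA; rewrite colc_big.
- by move=> A hA _; rewrite colc_big.
- move=> A hA; rewrite colc_big //.
  by apply: leq_trans (subset_leq_card hA); rewrite cards2.
Qed.

Lemma zcolE c0 c1 c2 c3 c4 (B : P4) : zcol c0 c1 c2 c3 c4 B =
  c0 + c1 * (e1 \in B)%:R + c2 * (e2 \in B)%:R + c3 * (e3 \in B)%:R + c4 * (e4 \in B)%:R.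
Proof. by rewrite ffunE. Qed.


Definition Phi n (b : {ffun 'I_n -> 'I_3} -> 'Z_8) (i j : 'I_n)
  (phi : nat -> nat -> 'Z_8) : 'Z_8 :=
  \sum_(beta | In_set beta) b beta * phi (beta i) (beta j).

Lemma Phi_ext n b (i j : 'I_n) f g : (forall u v, (u < 3)%N -> (v < 3)%N -> f u v = g u v) ->
  Phi b i j f = Phi b i j g.
Proof. by move=> h; apply: eq_bigr => beta _; rewrite h. Qed.

Lemma Phi_add n b (i j : 'I_n) f g :
  Phi b i j f + Phi b i j g = Phi b i j (fun u v => f u v + g u v).
Proof. by rewrite /Phi -big_split; apply: eq_bigr => beta _; rewrite mulrDr. Qed.

Lemma Phi_sub n b (i j : 'I_n) f g :
  Phi b i j f - Phi b i j g = Phi b i j (fun u v => f u v - g u v).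
Proof. by rewrite /Phi -sumrB; apply: eq_bigr => beta _; rewrite mulrBr. Qed.

Lemma Phi_scale n b (i j : 'I_n) c f :
  c * Phi b i j f = Phi b i j (fun u v => c * f u v).
Proof. by rewrite /Phi mulr_sumr; apply: eq_bigr => beta _; rewrite mulrCA. Qed.

Lemma prod_pair n (i j : 'I_n) (F : 'I_n -> 'Z_8) : i != j ->
  (forall k, k != i -> k != j -> F k = 1) -> \prod_(k < n) F k = F i * F j.
Proof.
move=> ij h; rewrite (bigD1 i) //= (bigD1 j) /=; last by rewrite eq_sym.
by rewrite big1 ?mulr1 // => k /andP[ki kj]; apply: h.
Qed.

Lemma fop_pair n b (i j : 'I_n) x : i != j ->
  (forall k, k != i -> k != j -> x k = 1) ->
  fop b x = Phi b i j (fun u v => x i * x j * (x i ^+ u * x j ^+ v)).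
Proof.
move=> ij h; rewrite /fop (prod_pair ij h) mulr_sumr; apply: eq_bigr => beta _.
rewrite /monom (prod_pair (F := fun k => x k ^+ beta k) ij); last first.
  by move=> k ki kj; rewrite h // expr1n.
by rewrite mulrCA.
Qed.

Definition inp n (i j : 'I_n) (X Y : vecP4) : 'I_n -> vecP4 :=
  fun k => if k == i then X else if k == j then Y else zcol 1 0 0 0 0.

Lemma test_pair n b (i j : 'I_n) X Y : i != j -> preservesZ (fop b) -> inZ X -> inZ Y ->
  exists a, (forall B, combo a B = Phi b i j (fun u v => X B * Y B * (X B ^+ u * Y B ^+ v)))
            /\ Zcoeffs a.
Proof.
move=> ij pZ hX hY.
have hin : forall k, inZ (inp i j X Y k).
  move=> k; rewrite /inp; case: (k == i) => //; case: (k == j) => //.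
  exact: zcol_inZ.
have [a [ha Za]] := pZ _ hin.
exists a; split => // B.
rewrite -ha ffunE (@fop_pair _ _ i j) //.
  by rewrite /inp eqxx eq_sym (negbTE ij) eqxx.
move=> k ki kj; rewrite /inp (negbTE ki) (negbTE kj) zcolE; ring.
Qed.

Definition O (X Y : vecP4) (B : P4) : nat -> nat -> 'Z_8 :=
  fun u v => X B * Y B * (X B ^+ u * Y B ^+ v).

Lemma l1 : forall z : 'Z_8, (4 %| val z)%N -> 2 * z = 0.
Proof. by case=> [[|[|[|[|[|[|[|[|m]]]]]]]] Hm] //= H; apply/eqP. Qed.
Lemma l2 : forall x y : 'Z_8, (val x %% 4 = (2 * val y) %% 4)%N -> 2 * x = 4 * y.
Proof. by case=> [[|[|[|[|[|[|[|[|m]]]]]]]] Hm] //; case=> [[|[|[|[|[|[|[|[|m']]]]]]]] Hm'] //= H; apply/eqP. Qed.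

Lemma Z1b_test n b (i j : 'I_n) X Y : i != j -> preservesZ (fop b) -> inZ X -> inZ Y ->
  Phi b i j (fun u v => 2 * (O X Y [set e4] u v - O X Y set0 u v)
                        - 4 * (O X Y [set e3] u v - O X Y set0 u v)) = 0.
Proof.
move=> ij pZ hX hY; have [a [ha [[_ Z1] _ _ _]]] := test_pair ij pZ hX hY.
have := l2 Z1; rewrite (zcoef1 a e4) (zcoef1 a e3) !ha !Phi_sub !Phi_scale.
by move/eqP; rewrite -subr_eq0 Phi_sub => /eqP.
Qed.

Lemma Z3_test n b (i j : 'I_n) X Y x y : i != j -> preservesZ (fop b) -> inZ X -> inZ Y ->
  x != y -> (x == e2) || (x == e4) || (y == e2) || (y == e4) ->
  Phi b i j (fun u v => 2 * (O X Y [set x; y] u v - O X Y [set x] u v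
                        - O X Y [set y] u v + O X Y set0 u v)) = 0.
Proof.
move=> ij pZ hX hY xy hxy; have [a [ha [_ _ Z3 _]]] := test_pair ij pZ hX hY.
have := l1 (Z3 [set x; y] _ _); rewrite (zcoef2 a) // !ha !Phi_sub Phi_add Phi_scale.
apply; first by rewrite cards2 xy.
apply/set0Pn; case/orP: hxy => [/orP[/orP[]|]|] /eqP->.
- by exists e2; rewrite !inE !eqxx.
- by exists e4; rewrite !inE !eqxx ?orbT.
- by exists e2; rewrite !inE !eqxx ?orbT.
- by exists e4; rewrite !inE !eqxx ?orbT.
Qed.

Lemma Z4_test n b (i j : 'I_n) X Y : i != j -> preservesZ (fop b) -> inZ X -> inZ Y ->
  Phi b i j (fun u v => O X Y [set e2; e4] u v - O X Y [set e2] u v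
                        - O X Y [set e4] u v + O X Y set0 u v) = 0.
Proof.
move=> ij pZ hX hY; have [a [ha [_ _ _ Z4]]] := test_pair ij pZ hX hY.
have := Z4 _ (subxx _); rewrite (zcoef2 a) // !ha !Phi_sub Phi_add.
by [].
Qed.

Lemma Phi0_add n b (i j : 'I_n) f g : Phi b i j f = 0 -> Phi b i j g = 0 ->
  Phi b i j (fun u v => f u v + g u v) = 0.
Proof. by move=> h1 h2; rewrite -Phi_add h1 h2 addr0. Qed.

Lemma Phi0_ext n b (i j : 'I_n) f g : Phi b i j f = 0 ->
  (forall u v, (u < 3)%N -> (v < 3)%N -> g u v = f u v) -> Phi b i j g = 0.
Proof. by move=> h1 h2; rewrite -h1; apply: Phi_ext. Qed.

Lemma zc0 c0 c1 c2 c3 c4 : zcol c0 c1 c2 c3 c4 set0 = c0.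
Proof. rewrite zcolE !inE /=; ring. Qed.
Lemma zc3 c0 c1 c2 c3 c4 : zcol c0 c1 c2 c3 c4 [set e3] = c0 + c3.
Proof. rewrite zcolE !inE /=; ring. Qed.
Lemma zc4 c0 c1 c2 c3 c4 : zcol c0 c1 c2 c3 c4 [set e4] = c0 + c4.
Proof. rewrite zcolE !inE /=; ring. Qed.
Lemma zc1 c0 c1 c2 c3 c4 : zcol c0 c1 c2 c3 c4 [set e1] = c0 + c1.
Proof. rewrite zcolE !inE /=; ring. Qed.
Lemma zc2 c0 c1 c2 c3 c4 : zcol c0 c1 c2 c3 c4 [set e2] = c0 + c2.
Proof. rewrite zcolE !inE /=; ring. Qed.
Lemma zc23 c0 c1 c2 c3 c4 : zcol c0 c1 c2 c3 c4 [set e2; e3] = c0 + c2 + c3.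
Proof. rewrite zcolE !inE /=; ring. Qed.
Lemma zc24 c0 c1 c2 c3 c4 : zcol c0 c1 c2 c3 c4 [set e2; e4] = c0 + c2 + c4.
Proof. rewrite zcolE !inE /=; ring. Qed.
Lemma zc14 c0 c1 c2 c3 c4 : zcol c0 c1 c2 c3 c4 [set e1; e4] = c0 + c1 + c4.
Proof. rewrite zcolE !inE /=; ring. Qed.
Lemma zc34 c0 c1 c2 c3 c4 : zcol c0 c1 c2 c3 c4 [set e3; e4] = c0 + c3 + c4.
Proof. rewrite zcolE !inE /=; ring. Qed.

Ltac pw := let u := fresh "u" in let v := fresh "v" in
  let hu := fresh "hu" in let hv := fresh "hv" in
  move=> u v hu hv; rewrite /O ?zc0 ?zc1 ?zc2 ?zc3 ?zc4 ?zc23 ?zc24 ?zc14 ?zc34;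
  case: u hu => [|[|[|u]]] hu //; case: v hv => [|[|[|v]]] hv //; apply/eqP.

Lemma pair_main n b (i j : 'I_n) : i != j -> preservesZ (fop b) ->
  forall e f, (e < 3)%N -> (f < 3)%N ->
  Phi b i j (fun u v => 4 * ((u == e) && (v == f))%:R) = 0.
Proof.
move=> ij pZ.
have hA : inZ (zcol 0 0 0 1 2) by apply: zcol_inZ.
have hB : inZ (zcol 0 1 2 0 0) by apply: zcol_inZ.
have hC : inZ (zcol 1 1 2 0 0) by apply: zcol_inZ.
have hD : inZ (zcol 1 0 0 1 2) by apply: zcol_inZ.
have hE : inZ (zcol 0 1 2 1 2) by apply: zcol_inZ.
have T1 := Z1b_test ij pZ hA hA.
have T2 := @Z3_test _ _ _ _ _ _ e3 e4 ij pZ hA hA isT isT.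
have T3 := @Z3_test _ _ _ _ _ _ e2 e3 ij pZ hA hB isT isT.
have T4 := @Z3_test _ _ _ _ _ _ e1 e4 ij pZ hA hB isT isT.
have T5 := Z4_test ij pZ hA hB.
have T6 := @Z3_test _ _ _ _ _ _ e2 e3 ij pZ hA hE isT isT.
have T7 := Z4_test ij pZ hA hC.
have T8 := Z4_test ij pZ hD hB.
have T9 := Z4_test ij pZ hD hC.
move=> e f he hf; case: e he => [|[|[|e]]] // _; case: f hf => [|[|[|f]]] // _.
- by apply: (Phi0_ext T5); pw.
- by apply: (Phi0_ext (Phi0_add T4 T7)); pw.
- by apply: (Phi0_ext (Phi0_add T5 T7)); pw.
- by apply: (Phi0_ext (Phi0_add T3 T8)); pw.
- by apply: (Phi0_ext (Phi0_add (Phi0_add T1 T2) T9)); pw.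
- by apply: (Phi0_ext (Phi0_add (Phi0_add (Phi0_add T3 T6) T8) T9)); pw.
- by apply: (Phi0_ext (Phi0_add T5 T8)); pw.
- by apply: (Phi0_ext (Phi0_add (Phi0_add (Phi0_add (Phi0_add T2 T4) T6) T7) T9)); pw.
- by apply: (Phi0_ext (Phi0_add (Phi0_add (Phi0_add T5 T7) T8) T9)); pw.
Qed.

Definition supp n (alpha : {ffun 'I_n -> 'I_3}) : {set 'I_n} := [set k | alpha k != ord0].

Lemma pick_pair n (S : {set 'I_n}) : (2 <= n)%N -> (#|S| <= 2)%N ->
  exists i j : 'I_n, i != j /\ S \subset [set i; j].
Proof.
move=> n2 hS.
have h0 : (0 < n)%N by apply: leq_trans n2.
pose i0 := Ordinal h0; pose i1 := Ordinal n2.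
have i01 : i0 != i1 by [].
move: hS; rewrite leq_eqVlt => /orP[/cards2P [x [y [xy ->]]]|].
  by exists x, y; split.
rewrite ltnS leq_eqVlt => /orP[/cards1P [x ->]|].
  case: (eqVneq x i0) => [->|xi0].
    by exists i0, i1; split => //; rewrite sub1set !inE eqxx.
  by exists x, i0; split => //; rewrite sub1set !inE eqxx.
rewrite ltnS leqn0 cards_eq0 => /eqP ->.
by exists i0, i1; split => //; rewrite sub0set.
Qed.

Lemma step n (b : {ffun 'I_n -> 'I_3} -> 'Z_8) alpha : (2 <= n)%N ->
  (forall alpha, In_set alpha -> b alpha = 0 \/ b alpha = 1) ->
  preservesZ (fop b) -> In_set alpha ->
  (forall beta, In_set beta -> (#|supp alpha| < #|supp beta|)%N -> b beta = 0) ->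
  b alpha = 0.
Proof.
move=> n2 h01 pZ ha IH.
have [i [j [ij sub]]] := pick_pair n2 ha.
have := pair_main ij pZ (ltn_ord (alpha i)) (ltn_ord (alpha j)).
rewrite /Phi (bigD1 alpha) //= !eqxx /= big1 ?addr0; last first.
  move=> beta /andP[hb nb].
  case E: ((beta i == alpha i :> nat) && (beta j == alpha j :> nat)); last by rewrite mulr0 mulr0.
  move/andP: E => [/eqP ei /eqP ej].
  have ei' : beta i = alpha i := val_inj ei.
  have ej' : beta j = alpha j := val_inj ej.
  rewrite IH ?mul0r //.
  apply: proper_card; apply/properP; split.
    apply/subsetP => k; rewrite !inE => ak.
    have : k \in [set i; j] by apply: (subsetP sub); rewrite inE.
    by rewrite !inE => /orP[] /eqP kij; rewrite kij ?ei' ?ej' -kij.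
  have [k nk] : exists k, beta k != alpha k.
    apply/existsP; apply: contraR nb => /existsPn h; apply/eqP/ffunP => k.
    exact/eqP/negPn/h.
  have kn : k \notin [set i; j].
    by rewrite !inE; apply/negP => /orP[] /eqP kk; move: nk; rewrite kk ?ei' ?ej' eqxx.
  have ak : alpha k = ord0.
    by apply/eqP; apply: contraR kn => akn; apply: (subsetP sub); rewrite inE.
  exists k; rewrite !inE ?ak ?eqxx //.
  by move: nk; rewrite ak.
by case: (h01 alpha ha) => -> //; rewrite mul1r mulr1 => /eqP.
Qed.
Unset Implicit Arguments.

Theorem lemma3p8 (n : nat) (b : {ffun 'I_n -> 'I_3} -> 'Z_8) :
  (2 <= n)%N ->
  (forall alpha, In_set alpha -> b alpha = 0 \/ b alpha = 1) ->
  preservesZ (fop b) ->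
  forall alpha, In_set alpha -> b alpha = 0.
Proof.
move=> n2 h01 pZ.
suff H : forall d alpha, In_set alpha -> (3 - #|supp alpha| <= d)%N -> b alpha = 0.
  by move=> alpha ha; apply: (H 3) => //; apply: leq_subr.
elim=> [|d IHd] alpha ha hd.
  by have : (#|supp alpha| <= 2)%N := ha; lia.
apply: step => // beta hb lt; apply: IHd => //.
by have : (#|supp beta| <= 2)%N := hb; lia.
Qed.
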